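(* For every IFA $\mathcal{A}$ with $n$ states there exists a mod-2-multiplicity automaton $\mathcal{A}'$ with at most $n$ states such that $L_{\mathcal{A}}(w) = L_{\mathcal{A}'}(w)$ for all $w \in \Sigma^*$ (identifying $0,1 \in \mathbb{Q}$ with $0,1 \in \mathbb{Z}_2$).
   Context: For a field $\mathbb{F}$, an $\mathbb{F}$-weighted automaton $\mathcal{A} = (Q, \Sigma, M, \alpha, \eta)$ consists of a finite state set $Q$, finite alphabet $\Sigma$, $M : \Sigma \to \mathbb{F}^{Q\times Q}$, initial row vector $\alpha \in \mathbb{F}^Q$, final column vector $\eta \in \mathbb{F}^Q$; with $M(a_1\cdots a_k) = M(a_1)\cdots M(a_k)$, it assigns $L_\mathcal{A}(w) = \alpha M(w)\eta \in \mathbb{F}$ to each $w \in \Sigma^*$. A $\mathbb{Q}$-weighted automaton is an IFA if $L_\mathcal{A}(w) \in \{0,1\}$ for all $w \in \Sigma^*$. A mod-2-multiplicity automaton is a $\mathbb{Z}_2$-weighted automaton, where $\mathbb{Z}_2 = \{0,1\}$ is the field with two elements; it accepts $w$ iff $L_\mathcal{A}(w) = 1$. The number of states is $|Q|$. *)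

(* Defs.v *)
From HB Require Import structures.
From mathcomp Require Import all_boot all_order all_algebra.
Set Implicit Arguments. Unset Strict Implicit. Unset Printing Implicit Defensive.
Import GRing.Theory.
Local Open Scope ring_scope.

Record wautomaton (F : fieldType) (Sigma : finType) (n : nat) := WAutomaton {
  wa_M : Sigma -> 'M[F]_n;
  wa_alpha : 'rV[F]_n;
  wa_eta : 'cV[F]_n
}.

Definition wa_Mword (F : fieldType) (Sigma : finType) (n : nat)
  (A : wautomaton F Sigma n) (w : seq Sigma) : 'M[F]_n :=
  foldr (fun a B => wa_M A a *m B) 1%:M w.

Definition wa_L (F : fieldType) (Sigma : finType) (n : nat)
  (A : wautomaton F Sigma n) (w : seq Sigma) : F :=
  (wa_alpha A *m wa_Mword A w *m wa_eta A) 0 0.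

Definition is_IFA (Sigma : finType) (n : nat) (A : wautomaton rat Sigma n) : Prop :=
  forall w : seq Sigma, wa_L A w = 0 \/ wa_L A w = 1.

(* Embedding of {0,1} in Q into Z_2: 0 |-> 0, anything else |-> 1
   (only applied to values in {0,1}). *)
Definition bit_of_rat (q : rat) : 'F_2 := if q == 0 then 0 else 1.

(* Main.v *)
Require Import Defs.
From mathcomp Require Import all_boot all_order all_algebra.
From Stdlib Require Import ClassicalEpsilon.
Set Implicit Arguments. Unset Strict Implicit. Unset Printing Implicit Defensive.
Import GRing.Theory.
Local Open Scope ring_scope.

Definition hank (F : fieldType) (Sigma : finType) (f : seq Sigma -> F) k
  (U V : 'I_k -> seq Sigma) : 'M[F]_k := \matrix_(i, j) f (U i ++ V j).

Lemma schur (F : fieldType) k (H : 'M[F]_k) (b : 'cV_k) (c : 'rV_k) (d : 'M_1) :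
  H \in unitmx -> \det (block_mx H b c d) = 0 -> d = c *m invmx H *m b.
Proof.
move=> uH hd.
have E : block_mx H b c d = block_mx 1%:M 0 (c *m invmx H) 1%:M *m
            block_mx H b 0 (d - c *m invmx H *m b).
  rewrite mulmx_block !mul1mx !mul0mx ?mulmx0 !addr0 -mulmxA mulVmx //.
  by rewrite mulmx1 addrC subrK.
move: hd; rewrite E det_mulmx det_lblock det_ublock !det1 !mul1r.
move=> /eqP; rewrite mulf_eq0 => /orP [].
  by move=> h; move: uH; rewrite unitmxE unitfE h => /negP [].
rewrite det_mx11 => /eqP h.
apply/matrixP => i j; rewrite !ord1.
by apply/eqP; rewrite -subr_eq0 -h !mxE.
Qed.

Lemma MwordE (F : fieldType) (Sigma : finType) n (A : wautomaton F Sigma n) u v :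
  wa_Mword A (u ++ v) = wa_Mword A u *m wa_Mword A v.
Proof.
elim: u => [|a u IH] /=; first by rewrite mul1mx.
by rewrite /wa_Mword /= -/(wa_Mword A (u ++ v)) -/(wa_Mword A u) IH mulmxA.
Qed.

Lemma realize (F : fieldType) (Sigma : finType) (f : seq Sigma -> F) k
  (U V : 'I_k -> seq Sigma) :
  \det (hank f U V) != 0 ->
  (forall U' V' : 'I_(k + 1) -> seq Sigma, \det (hank f U' V') = 0) ->
  exists A' : wautomaton F Sigma k, forall w, wa_L A' w = f w.
Proof.
move=> dH hmax.
set H := hank f U V.
have uH : H \in unitmx by rewrite unitmxE unitfE.
set r := fun p : seq Sigma => (\row_j f (p ++ V j)) *m invmx H.
have star : forall p x, f (p ++ x) = (r p *m \col_i f (U i ++ x)) 0 0.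
  move=> p x.
  pose U' := fun i : 'I_(k + 1) => match split i with inl i1 => U i1 | inr _ => p end.
  pose V' := fun j : 'I_(k + 1) => match split j with inl j1 => V j1 | inr _ => x end.
  have E : hank f U' V' = block_mx H (\col_i f (U i ++ x)) (\row_j f (p ++ V j))
                                   (\col_i f (p ++ x)).
    apply/matrixP => i j; rewrite /block_mx /col_mx /row_mx /hank !mxE /U' /V'.
    by case: (split i) => i1; rewrite !mxE; case: (split j) => j1; rewrite ?mxE.
  have := hmax U' V'; rewrite E => /(schur uH) /matrixP /(_ 0 0).
  by rewrite mxE /r -mulmxA => ->.
pose Ma := fun a : Sigma => (\matrix_(i, j) f (U i ++ a :: V j)) *m invmx H.
exists (WAutomaton Ma (r [::]) (\col_i f (U i))) => w.
have step : forall p a, r p *m Ma a = r (rcons p a).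
  move=> p a; rewrite /Ma mulmxA /r; congr (_ *m _).
  apply/rowP => j; rewrite !mxE cat_rcons star.
  by rewrite !mxE; apply: eq_bigr => l _; rewrite !mxE /r.
have ind : forall w p, r p *m wa_Mword (WAutomaton Ma (r [::]) (\col_i f (U i))) w
                       = r (p ++ w).
  elim => [|b w' IH] p; first by rewrite /wa_Mword /= mulmx1 cats0.
  rewrite /wa_Mword /= -/(wa_Mword _ w') mulmxA step IH.
  by rewrite cat_rcons.
rewrite /wa_L /= ind /=.
have := star w [::]; rewrite cats0 => ->.
by congr ((r w *m _) 0 0); apply/colP => i; rewrite !mxE cats0.
Qed.

Lemma bound (Sigma : finType) (n : nat) (A : wautomaton rat Sigma n) k
  (U V : 'I_k -> seq Sigma) :
  is_IFA A ->
  \det (hank (fun w => bit_of_rat (wa_L A w)) U V) != 0 -> (k <= n)%N.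
Proof.
move=> hA hd.
pose B : 'M[int]_k := \matrix_(i, j) (if wa_L A (U i ++ V j) == 0 then 0 else 1).
have e2 : hank (fun w => bit_of_rat (wa_L A w)) U V = map_mx (intr : int -> 'F_2) B.
  apply/matrixP => i j; rewrite !mxE /bit_of_rat.
  by case: ifP.
have e1 : \matrix_(i, j) wa_L A (U i ++ V j) = map_mx (intr : int -> rat) B.
  apply/matrixP => i j; rewrite !mxE.
  by case: (hA (U i ++ V j)) => ->.
pose Pm : 'M[rat]_(k, n) := \matrix_(i, l) (wa_alpha A *m wa_Mword A (U i)) 0 l.
pose Qm : 'M[rat]_(n, k) := \matrix_(l, j) (wa_Mword A (V j) *m wa_eta A) l 0.
have e3 : \matrix_(i, j) wa_L A (U i ++ V j) = Pm *m Qm.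
  apply/matrixP => i j; rewrite !mxE /wa_L MwordE mulmxA -mulmxA mxE.
  by apply: eq_bigr => l _; rewrite !mxE.
have dB : \det B != 0.
  apply: contra hd => /eqP h.
  by rewrite e2 det_map_mx h rmorph0.
have uQ : (Pm *m Qm) \in unitmx.
  by rewrite -e3 e1 unitmxE unitfE det_map_mx intr_eq0.
have := mxrank_unit uQ => rk.
have := mxrankM_maxl Pm Qm; rewrite rk => h.
exact: leq_trans h (rank_leq_col Pm).
Qed.

Theorem proposition6 (Sigma : finType) (n : nat) (A : wautomaton rat Sigma n) :
  is_IFA A ->
  exists (m : nat) (A' : wautomaton 'F_2 Sigma m),
    (m <= n)%N /\ forall w : seq Sigma, wa_L A' w = bit_of_rat (wa_L A w).
Proof.
move=> hA.
pose f := fun w => bit_of_rat (wa_L A w).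
pose P k := exists U V : 'I_k -> seq Sigma, \det (hank f U V) != 0.
pose pb k := if excluded_middle_informative (P k) then true else false.
have pbP : forall k, pb k <-> P k.
  by move=> k; rewrite /pb; case: excluded_middle_informative.
have ex : exists k, pb k.
  exists 0%N; apply/pbP; exists (fun _ => [::]), (fun _ => [::]).
  by rewrite det_mx00 oner_neq0.
have ub : forall k, pb k -> (k <= n)%N.
  by move=> k /pbP [U [V h]]; exact: bound hA h.
case: (ex_maxnP ex ub) => k /pbP [U [V hd]] hmax.
have hm : forall U' V' : 'I_(k + 1) -> seq Sigma, \det (hank f U' V') = 0.
  move=> U' V'; apply/eqP; apply/negPn/negP => h.
  have : (k + 1 <= k)%N by apply: hmax; apply/pbP; exists U', V'.
  by rewrite addn1 ltnn.
have [A' hA'] := realize hd hm.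
exists k, A'; split; first by apply: ub; apply/pbP; exists U, V.
exact: hA'.
Qed.
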